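(* For every integer $k\geq 1$, the Dobrynin graph $\mathrm{Dob}_k$ (defined below) is interval transmission irregular; more precisely, its $2k+5$ vertices have pairwise distinct transmissions, and the set of these transmissions is $\{3k+4,3k+5,\dots,5k+8\}$.
   Context: All graphs are finite, simple and connected. For a connected graph $G$ and a vertex $u$, the transmission is $Tr_G(u)=\sum_{v\in V(G)} d_G(u,v)$, where $d_G$ is the shortest-path distance. A graph is transmission irregular (TI) if no two of its vertices have equal transmission, and interval transmission irregular (ITI) if it is TI and its set of vertex transmissions equals $[p,q]\cap\mathbb{Z}$ for some integers $p\le q$. The Dobrynin graph $\mathrm{Dob}_k$ ($k\ge1$) has vertex set $\{a,b,c,d\}\cup A\cup B\cup\{ab_1,ab_2\}$ with $A=\{a_0,a_1,\dots,a_{k-1}\}$ and $B=\{b_1,\dots,b_{k-1}\}$ (so $B=\emptyset$ when $k=1$), and edge set: $ab$; $ac$ and $bd$ (so $c,d$ are pendent); $a a_i$ for all $i$; $b b_j$ for all $j$; $a\,ab_1, b\,ab_1, a\,ab_2, b\,ab_2$; $a_i b_j$ for all $1\le j\le i\le k-1$ (so $a_i$ is adjacent to $b_1,\dots,b_i$); $ab_1 a_i$ for all $0\le i\le k-1$; and $ab_2 b_j$ for all $1\le j\le k-1$. There are no other edges. *)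

(* Defs.v *)
From mathcomp Require Import all_boot.
Set Implicit Arguments. Unset Strict Implicit. Unset Printing Implicit Defensive.

Definition walkb (T : finType) (e : rel T) (u v : T) (n : nat) : bool :=
  [exists p : n.-tuple T, path e u p && (last u p == v)].

(* In a connected graph on #|T| vertices such an n exists and is < #|T|, so the
   search range iota 0 #|T| suffices (unreachable pairs would get #|T|). *)
Definition dist (T : finType) (e : rel T) (u v : T) : nat :=
  find (walkb e u v) (iota 0 #|T|).

Definition connectedb (T : finType) (e : rel T) : bool :=
  [forall u, forall v, has (walkb e u v) (iota 0 #|T|)].

Definition simple_graph (T : finType) (e : rel T) : Prop :=
  (forall x y, e x y = e y x) /\ (forall x, ~~ e x x).

Definition transmission (T : finType) (e : rel T) (u : T) : nat :=
  \sum_(v : T) dist e u v.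

Definition TI (T : finType) (e : rel T) : Prop := injective (transmission e).

Definition ITI (T : finType) (e : rel T) : Prop :=
  TI e /\ exists p q : nat, p <= q /\
    forall n : nat, (exists u : T, transmission e u = n) <-> p <= n <= q.

Inductive dob_kind := Ka | Kb | Kc | Kd | KA of nat | KB of nat | Kab1 | Kab2.

(* Vertex type: 4 named vertices a,b,c,d; A = {a_0..a_{k-1}};
   B = {b_1..b_{k-1}} (index j : 'I_(k-1) stands for b_{j+1}); ab_1, ab_2. *)
Definition dob_vertex (k : nat) : finType := ('I_4 + 'I_k + 'I_k.-1 + 'I_2)%type.

Definition dob_kind_of (k : nat) (x : dob_vertex k) : dob_kind :=
  match x with
  | inl (inl (inl t)) =>
      match nat_of_ord t with 0 => Ka | 1 => Kb | 2 => Kc | _ => Kd end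
  | inl (inl (inr i)) => KA (nat_of_ord i)
  | inl (inr j) => KB (nat_of_ord j).+1
  | inr t => if nat_of_ord t == 0 then Kab1 else Kab2
  end.

(* One orientation of each edge of Dob_k. *)
Definition dob_edge1 (p q : dob_kind) : bool :=
  match p, q with
  | Ka, Kb | Ka, Kc | Kb, Kd => true
  | Ka, KA _ => true
  | Kb, KB _ => true
  | Kab1, Ka | Kab1, Kb | Kab2, Ka | Kab2, Kb => true
  | KA i, KB j => j <= i
  | Kab1, KA _ => true
  | Kab2, KB _ => true
  | _, _ => false
  end.

Definition dob_adj (k : nat) : rel (dob_vertex k) :=
  fun x y => dob_edge1 (dob_kind_of x) (dob_kind_of y)
          || dob_edge1 (dob_kind_of y) (dob_kind_of x).

(* Main.v *)
Require Import Defs.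
From mathcomp Require Import all_boot zify.
Lemma sum_if_lt n m x y : \sum_(j < n) (if j < m then x else y) = minn m n * x + (n - m) * y.
Proof. elim: n => [|n IH]; first by rewrite big_ord0; lia.
rewrite big_ord_recr /= IH. case: (ltnP n m) => H.
- have -> : minn m n.+1 = n.+1 by lia.
  have -> : n - m = 0 by lia. have -> : n.+1 - m = 0 by lia. nia.
- have -> : minn m n.+1 = m by lia.
  have -> : n.+1 - m = (n - m).+1 by lia. nia.
Qed.
Lemma sum_if_eq n m x y : \sum_(j < n) (if m == (j:nat) then x else y) = (if m < n then x + n.-1*y else n*y).
Proof. elim: n => [|n IH]; first by rewrite big_ord0.
rewrite big_ord_recr /= IH. case: (ltngtP m n) => H2; case: (ltngtP m n.+1) => H //; try nia.
Qed.

Section W.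
Variables (T : finType) (e : rel T).
Lemma walkbP n u v : reflect (exists s : seq T, [/\ size s = n, path e u s & last u s == v]) (walkb e u v n).
Proof.
apply: (iffP existsP) => [[p /andP[Hp Hl]]|[s [Hs Hp Hl]]].
  by exists (val p); rewrite size_tuple.
have Hs' : size s == n by apply/eqP.
by exists (Tuple Hs'); rewrite /= Hp Hl.
Qed.
Lemma walk0 u v : walkb e u v 0 = (u == v).
Proof. apply/walkbP/idP => [[[|? ?] [] //]|/eqP ->]; by exists [::]. Qed.
Lemma walk1 u v : walkb e u v 1 = e u v.
Proof. apply/walkbP/idP => [[[|w [|? ?]] [] //= _ ]|H]; first by rewrite andbT => H /eqP <-.
by exists [:: v]; rewrite /= H. Qed.
Lemma walk2 u v : walkb e u v 2 -> exists w, e u w && e w v.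
Proof. move/walkbP => [[|w [|w2 [|? ?]]] [] //= _ ]; rewrite andbT => /andP[H1 H2] /eqP <-.
by exists w; rewrite H1 H2. Qed.
Lemma walk2' u v w : e u w -> e w v -> walkb e u v 2.
Proof. move=> H1 H2; apply/walkbP; exists [:: w; v]; by rewrite /= H1 H2. Qed.
Lemma walk3' u v w1 w2 : e u w1 -> e w1 w2 -> e w2 v -> walkb e u v 3.
Proof. move=> H1 H2 H3; apply/walkbP; exists [:: w1; w2; v]; by rewrite /= H1 H2 H3. Qed.
Lemma dist_eq u v m : m < #|T| -> walkb e u v m -> (forall n, n < m -> ~~ walkb e u v n) -> dist e u v = m.
Proof.
move=> Hm Hw Hlt; rewrite /dist.
have Hhas : has (walkb e u v) (iota 0 #|T|).
  by apply/hasP; exists m => //; rewrite mem_iota.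
have Hi := has_find (walkb e u v) (iota 0 #|T|); rewrite Hhas size_iota in Hi.
have Hn := nth_find 0 Hhas. rewrite nth_iota // add0n in Hn.
case: (ltngtP (find (walkb e u v) (iota 0 #|T|)) m) => H //.
- by move: (Hlt _ H); rewrite Hn.
- have := before_find 0 H; rewrite nth_iota // add0n Hw //.
Qed.
End W.

Definition keqb (p q : dob_kind) : bool :=
  match p, q with
  | Ka,Ka | Kb,Kb | Kc,Kc | Kd,Kd | Kab1,Kab1 | Kab2,Kab2 => true
  | KA i, KA j => i == j | KB i, KB j => i == j | _,_ => false end.
Lemma keqbP p q : keqb p q -> p = q.
Proof. by case: p; case: q => //= ? ? /eqP ->. Qed.
Lemma keqb_refl p : keqb p p.
Proof. by case: p => //= ?. Qed.
Definition kadj p q := dob_edge1 p q || dob_edge1 q p.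
Definition far1 p q := match p,q with Kc,Kd | Kc,KB _ | Kd,KA _ => true | KA i, KB j => i < j | _,_ => false end.
Definition D p q := if keqb p q then 0 else if kadj p q then 1 else if far1 p q || far1 q p then 3 else 2.
Definition kvalid k p := match p with KA i => i < k | KB j => 0 < j < k | _ => true end.

Lemma D_le3 p q : D p q <= 3.
Proof. rewrite /D; by repeat case: ifP. Qed.

Lemma D2 p q : D p q = 2 -> (kadj p Ka && kadj Ka q) || (kadj p Kb && kadj Kb q).
Proof. rewrite /D /kadj; case: p => [||||i|i||]; case: q => [||||j|j||] //=.
all: try (case: ifP => //; case: ifP => //; case: ifP => //).
all: rewrite ?orbF; case: leqP => //.
Qed.
Lemma D3p p q : D p q = 3 -> (kadj p Ka && kadj Ka Kb && kadj Kb q) || (kadj p Kb && kadj Kb Ka && kadj Ka q).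
Proof. rewrite /D /kadj; case: p => [||||i|i||]; case: q => [||||j|j||] //=.
all: try (case: ifP => //; case: ifP => //; case: ifP => //).
all: rewrite ?orbF; case: leqP => //.
Qed.
Lemma D3n p q w : D p q = 3 -> ~~ (kadj p w && kadj w q).
Proof. rewrite /D /kadj; case: p => [||||i|i||]; case: q => [||||j|j||] //=.
all: try (case: ifP => //; case: ifP => //; case: ifP => //).
all: rewrite ?orbF; try (case: leqP => //); case: w => [||||l|l||] //=; rewrite ?orbF ?andbF //.
all: try lia.
Qed.
Lemma kind_inj k (x y : dob_vertex k) : dob_kind_of x = dob_kind_of y -> x = y.
Proof.
case: x => [[[t|i]|j]|s]; case: y => [[[t'|i']|j']|s'] /=;
  try (case: t => [[|[|[|[|?]]]] ?] //=); try (case: t' => [[|[|[|[|?]]]] ?] //=);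
  try (case: s => [[|[|?]] ?] //=); try (case: s' => [[|[|?]] ?] //=).
all: try (by move=> _; do 3 congr (_ _); apply: val_inj).
all: try (by move=> _; congr (_ _); apply: val_inj).
all: try (by move=> [/val_inj ->]).
all: discriminate.
Qed.

Lemma kind_valid k (x : dob_vertex k) : kvalid k (dob_kind_of x).
Proof.
case: x => [[[t|i]|j]|s] /=; try (case: t => [[|[|[|[|?]]]] ?] //=); try (case: s => [[|[|?]] ?] //=).
- exact: ltn_ord.
- have := ltn_ord j; lia.
Qed.
Lemma kind_surj k p : kvalid k p -> exists x : dob_vertex k, dob_kind_of x = p.
Proof.
case: p => [||||i|j||] /=.
- by exists (inl (inl (inl (@Ordinal 4 0 isT)))).
- by exists (inl (inl (inl (@Ordinal 4 1 isT)))).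
- by exists (inl (inl (inl (@Ordinal 4 2 isT)))).
- by exists (inl (inl (inl (@Ordinal 4 3 isT)))).
- by move=> H; exists (inl (inl (inr (Ordinal H)))).
- move=> H; have H' : j.-1 < k.-1 by lia.
  exists (inl (inr (Ordinal H'))) => /=; congr KB; lia.
- by exists (inr (@Ordinal 2 0 isT)).
- by exists (inr (@Ordinal 2 1 isT)).
Qed.
Lemma D0 p q : D p q = 0 -> p = q.
Proof. rewrite /D; case: ifP => [/keqbP //|_]; by repeat case: ifP. Qed.
Lemma Dref p : D p p = 0.
Proof. by rewrite /D keqb_refl. Qed.
Lemma D1 p q : D p q = 1 -> kadj p q.
Proof. rewrite /D; case: ifP => // _; case: ifP => // _; by case: ifP. Qed.
Lemma D2n p q : 2 <= D p q -> ~~ kadj p q.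
Proof. rewrite /D; case: ifP => // _; case: ifP => // _. Qed.

Lemma card_dob k : #|dob_vertex k| = 4 + k + k.-1 + 2.
Proof. by rewrite /dob_vertex !card_sum !card_ord. Qed.

Definition va k : dob_vertex k := inl (inl (inl (@Ordinal 4 0 isT))).
Definition vb k : dob_vertex k := inl (inl (inl (@Ordinal 4 1 isT))).

Lemma dist_dob k (u v : dob_vertex k) : dist (@dob_adj k) u v = D (dob_kind_of u) (dob_kind_of v).
Proof.
have Hle := D_le3 (dob_kind_of u) (dob_kind_of v).
have Hne : 0 < D (dob_kind_of u) (dob_kind_of v) -> u <> v.
  by move=> H E; move: H; rewrite E Dref.
apply: dist_eq.
- rewrite card_dob; lia.
- move: Hle Hne; case E: (D (dob_kind_of u) (dob_kind_of v)) => [|[|[|[|?]]]] // _ Hne.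
  + by rewrite walk0 (@kind_inj _ _ _ (D0 _ _ E)).
  + by rewrite walk1; apply: D1.
  + case/orP: (D2 _ _ E) => /andP[H1 H2]; [exact: (@walk2' _ _ _ _ (va k)) | exact: (@walk2' _ _ _ _ (vb k))].
  + case/orP: (D3p _ _ E) => /andP[/andP[H1 H2] H3];
      [exact: (@walk3' _ _ _ _ (va k) (vb k)) | exact: (@walk3' _ _ _ _ (vb k) (va k))].
- move=> [|[|[|n]]] Hn.
  + by rewrite walk0; apply/eqP; apply: Hne; lia.
  + by rewrite walk1; apply: D2n; lia.
  + apply/negP => /walk2 [w /andP[H1 H2]].
    have E : D (dob_kind_of u) (dob_kind_of v) = 3 by lia.
    by move: (D3n _ _ (dob_kind_of w) E); rewrite /dob_adj in H1 H2 *; rewrite /kadj H1 H2.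
  + lia.
Qed.

Definition S k p := D p Ka + D p Kb + D p Kc + D p Kd + \sum_(i<k) D p (KA i)
  + \sum_(j<k.-1) D p (KB j.+1) + D p Kab1 + D p Kab2.

Lemma tr_dob k (u : dob_vertex k) : transmission (@dob_adj k) u = S k (dob_kind_of u).
Proof.
rewrite /transmission; under eq_bigr do rewrite dist_dob.
rewrite /dob_vertex !big_sumType /= !big_ord_recr !big_ord0 /= /S.
by rewrite !add0n !addnA.
Qed.

Definition Tv k p := match p with Ka => 3*k+4 | Kb => 3*k+5 | Kc => 5*k+7 | Kd => 5*k+8
  | Kab1 => 3*k+6 | Kab2 => 3*k+7 | KA i => 5*k+6-2*i | KB j => 3*k+7+2*j end.

Lemma sum_const n c : \sum_(i < n) c = n * c.
Proof. by rewrite sum_nat_const card_ord. Qed.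

Lemma S_val k p : 1 <= k -> kvalid k p -> S k p = Tv k p.
Proof.
move=> hk; rewrite /S; case: p => [||||i0|j0||] /= Hv.
all: try (rewrite /D /= !sum_const; lia).
- rewrite (eq_bigr (fun i : 'I_k => if i0 == (i:nat) then 0 else 2)); last first.
    by move=> i _; rewrite /D /=; case: ifP.
  rewrite (eq_bigr (fun i : 'I_k.-1 => if (i:nat) < i0 then 1 else 3)); last first.
    by move=> i _; rewrite /D /kadj /= !orbF; case: (ltnP i i0) => H //; rewrite ltnS H.
  rewrite (sum_if_eq k i0 0 2) (sum_if_lt k.-1 i0 1 3) Hv /D /=; lia.
- rewrite (eq_bigr (fun i : 'I_k => if (i:nat) < j0 then 3 else 1)); last first.
    by move=> i _; rewrite /D /kadj /=; case: (ltnP i j0).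
  rewrite (eq_bigr (fun i : 'I_k.-1 => if j0.-1 == (i:nat) then 0 else 2)); last first.
    move=> i _; rewrite /D /=; case: eqP => H1; case: eqP => H2 //; lia.
  rewrite (sum_if_lt k j0 3 1) (sum_if_eq k.-1 j0.-1 0 2) /D /=.
  have -> : j0.-1 < k.-1 by lia.
  lia.
Qed.

Lemma Tv_inj k p q : 1 <= k -> kvalid k p -> kvalid k q -> Tv k p = Tv k q -> p = q.
Proof.
move=> hk; case: p => [||||i|i||]; case: q => [||||j|j||] //= Hp Hq E;
  first [exfalso; lia | congr (_ _); lia].
Qed.

Lemma tr_val k (u : dob_vertex k) : 1 <= k -> transmission (@dob_adj k) u = Tv k (dob_kind_of u).
Proof. by move=> hk; rewrite tr_dob S_val // kind_valid. Qed.

Theorem theorem3 (k : nat) (hk : 1 <= k) :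
  #|dob_vertex k| = 2 * k + 5 /\
  injective (transmission (@dob_adj k)) /\
  (forall n : nat,
     (exists u : dob_vertex k, transmission (@dob_adj k) u = n) <->
     3 * k + 4 <= n <= 5 * k + 8) /\
  ITI (@dob_adj k).
Proof.
have Hinj : injective (transmission (@dob_adj k)).
  move=> u v; rewrite !tr_val // => E; apply: kind_inj.
  exact: (Tv_inj _ _ _ hk (kind_valid _ u) (kind_valid _ v) E).
have Hrange : forall n : nat,
     (exists u : dob_vertex k, transmission (@dob_adj k) u = n) <->
     3 * k + 4 <= n <= 5 * k + 8.
  move=> n; split.
    move=> [u <-]; rewrite tr_val //.
    have := kind_valid _ u; case: (dob_kind_of u) => [||||i|i||] /= H; lia.
  move=> Hn.
  suff [p [Hp Ep]] : exists p, kvalid k p /\ Tv k p = n.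
    have [x Ex] := kind_surj _ _ Hp. by exists x; rewrite tr_val // Ex.
  have [E|E] : n = 3*k+4 \/ 3*k+4 < n by lia. by exists Ka.
  have [E'|E'] : n = 3*k+5 \/ 3*k+5 < n by lia. by exists Kb.
  have [E2|E2] : n = 3*k+6 \/ 3*k+6 < n by lia. by exists Kab1.
  have [E3|E3] : n = 3*k+7 \/ 3*k+7 < n by lia. by exists Kab2.
  have [E4|E4] : n = 5*k+7 \/ n <> 5*k+7 by lia. by exists Kc.
  have [E5|E5] : n = 5*k+8 \/ n <> 5*k+8 by lia. by exists Kd.
  have [q Hq] : exists q, n = q * 2 \/ n = (q * 2).+1.
    exists n./2; move: (odd_double_half n); rewrite -muln2.
    case: (odd n) => /= H; [right|left]; lia.
  have [r Hr] : exists r, k = r * 2 \/ k = (r * 2).+1.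
    exists k./2; move: (odd_double_half k); rewrite -muln2.
    case: (odd k) => /= H; [right|left]; lia.
  case: Hq => Hq; case: Hr => Hr.
  - exists (KA (5*r+3-q)); rewrite /=; lia.
  - exists (KB (q-3*r-5)); rewrite /=; lia.
  - exists (KB (q-3*r-3)); rewrite /=; lia.
  - exists (KA (5*r+5-q)); rewrite /=; lia.
split; first by rewrite card_dob; lia.
split; first exact: Hinj.
split; first exact: Hrange.
split; first exact: Hinj.
by exists (3*k+4), (5*k+8); split; [lia|].
Qed.
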